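(* There exist a constant $c>0$ and, for infinitely many positive integers $n$, a set $P_n$ of $n$ points in the plane such that every locally Gabriel graph on $P_n$ has dilation at least $c\sqrt{n}$.
   Context: A geometric graph $H=(P,F)$ on a finite point set $P\subset\mathbb{R}^2$ (edges drawn as straight segments) is a locally Gabriel graph (LGG) if for every edge $(u,v)\in F$, the closed disk having the segment $\overline{uv}$ as diameter contains no point of $P$ other than $u,v$ that is a neighbor of $u$ or of $v$ in $H$ (equivalently, no two edges $(u,v),(u,w)$ sharing an endpoint satisfy $\angle uwv\ge \pi/2$ or $\angle uvw\ge\pi/2$). For $u,v\in P$, let $D_H(u,v)$ be the length (sum of Euclidean edge lengths) of a shortest path from $u$ to $v$ in $H$ ($\infty$ if none exists) and $D_2(u,v)$ the Euclidean distance. The dilation of $H$ is $\max_{u\ne v\in P} D_H(u,v)/D_2(u,v)$. *)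

(* Defs.v *)
From Stdlib Require Import Reals List.
Import ListNotations.
Open Scope R_scope.

Definition point := (R * R)%type.

Definition dist2 (p q : point) : R :=
  sqrt ((fst p - fst q) ^ 2 + (snd p - snd q) ^ 2).

Definition geom_graph (P : list point) (F : point -> point -> Prop) : Prop :=
  (forall u v, F u v -> In u P /\ In v P /\ u <> v) /\
  (forall u v, F u v -> F v u).

(* w lies in the closed disk having segment uv as diameter *)
Definition in_diam_disk (u v w : point) : Prop :=
  (fst w - fst u) * (fst w - fst v) + (snd w - snd u) * (snd w - snd v) <= 0.

Definition LGG (P : list point) (F : point -> point -> Prop) : Prop :=
  geom_graph P F /\
  forall u v, F u v ->
    forall w, In w P -> w <> u -> w <> v -> (F u w \/ F v w) ->
      ~ in_diam_disk u v w.

Fixpoint is_walk (F : point -> point -> Prop) (x : point) (xs : list point)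
  : Prop :=
  match xs with
  | [] => True
  | y :: ys => F x y /\ is_walk F y ys
  end.

Fixpoint walk_length (x : point) (xs : list point) : R :=
  match xs with
  | [] => 0
  | y :: ys => dist2 x y + walk_length y ys
  end.

Definition walk_end (x : point) (xs : list point) : point := last xs x.

(* "dilation of H is at least K": there are u <> v in P with
   D_H(u,v) >= K * D_2(u,v), where D_H(u,v) is the minimum length of a
   path from u to v (infinite if none): i.e. every u-v walk in H has
   length at least K * D_2(u,v). *)
Definition dilation_at_least (P : list point) (F : point -> point -> Prop)
  (K : R) : Prop :=
  exists u v, In u P /\ In v P /\ u <> v /\
    forall xs, is_walk F u xs -> walk_end u xs = v ->
      walk_length u xs >= K * dist2 u v.

(* Main.v *)
Require Import Defs.
From Stdlib Require Import Reals List Lra Lia Psatz Classical.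
Import ListNotations.
Open Scope R_scope.

Lemma sqrt_le_of (x y : R) : 0 <= y -> x <= y * y -> sqrt x <= y.
Proof. intros Hy Hx. rewrite <- (sqrt_square y Hy). now apply sqrt_le_1_alt. Qed.

Lemma le_sqrt_of (x z : R) : x * x <= z -> x <= sqrt z.
Proof.
  intros H. destruct (Rle_dec x 0) as [Hx|Hx].
  - pose proof (sqrt_pos z); lra.
  - rewrite <- (sqrt_square x) by lra. now apply sqrt_le_1_alt.
Qed.

Lemma dist2_ge (p q : point) (e1 e2 : R) : e1 * e1 + e2 * e2 = 1 ->
  (fst p - fst q) * e1 + (snd p - snd q) * e2 <= dist2 p q.
Proof.
  intros He. unfold dist2. apply le_sqrt_of.
  set (x := fst p - fst q). set (y := snd p - snd q).
  assert (0 <= (x*e2 - y*e1)^2) by apply pow2_ge_0.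
  replace (x^2 + y^2) with ((x^2+y^2) * (e1*e1+e2*e2)) by (rewrite He; ring). nra.
Qed.

Lemma dist2_nonneg p q : 0 <= dist2 p q.
Proof. apply sqrt_pos. Qed.

Lemma dist2_refl p : dist2 p p = 0.
Proof. unfold dist2. replace ((fst p - fst p) ^ 2 + (snd p - snd p) ^ 2) with 0 by ring. apply sqrt_0. Qed.

Lemma dist2_tri p q r : dist2 p r <= dist2 p q + dist2 q r.
Proof.
  unfold dist2.
  set (a := fst p - fst q). set (b := fst q - fst r).
  set (c := snd p - snd q). set (d := snd q - snd r).
  replace (fst p - fst r) with (a + b) by (unfold a, b; ring).
  replace (snd p - snd r) with (c + d) by (unfold c, d; ring).
  set (u := sqrt (a^2 + c^2)). set (v := sqrt (b^2 + d^2)).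
  assert (Hu : u * u = a^2 + c^2) by (apply sqrt_sqrt; nra).
  assert (Hv : v * v = b^2 + d^2) by (apply sqrt_sqrt; nra).
  assert (Hu0 : 0 <= u) by apply sqrt_pos.
  assert (Hv0 : 0 <= v) by apply sqrt_pos.
  assert (Huv : a*b + c*d <= u * v).
  {     assert (Hx : (a*b + c*d) * (a*b+c*d) <= (u*v)*(u*v)).
    { replace ((u*v)*(u*v)) with ((u*u)*(v*v)) by ring. rewrite Hu, Hv.
      assert (0 <= (a*d - b*c)^2) by apply pow2_ge_0. nra. }
    destruct (Rle_dec (a*b+c*d) 0). nra.
    apply Rsqr_incr_0_var; unfold Rsqr; nra. }
  apply sqrt_le_of. lra. nra.
Qed.

Lemma wl_nonneg x xs : 0 <= walk_length x xs.
Proof.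
  revert x; induction xs as [|z zs IH]; intros x; simpl. lra.
  pose proof (dist2_nonneg x z); pose proof (IH z); lra.
Qed.

Lemma last_cons_indep (l : list point) : forall y d1 d2, last (y :: l) d1 = last (y :: l) d2.
Proof.
  induction l as [|a l IH]; intros y d1 d2. reflexivity.
  change (last (a :: l) d1 = last (a :: l) d2). apply IH.
Qed.

Lemma walk_end_cons x z zs : walk_end x (z :: zs) = walk_end z zs.
Proof.
  unfold walk_end. destruct zs as [|y ys]. reflexivity.
  change (last (y :: ys) x = last (y :: ys) z). apply last_cons_indep.
Qed.

Lemma wl_end x xs : dist2 x (walk_end x xs) <= walk_length x xs.
Proof.
  revert x; induction xs as [|z zs IH]; intros x.
  - unfold walk_end; simpl. rewrite dist2_refl. lra.
  - rewrite walk_end_cons. simpl. pose proof (IH z).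
    pose proof (dist2_tri x z (walk_end z zs)). lra.
Qed.

Lemma crossing (F : point -> point -> Prop) (P : list point) (PA PB : point -> Prop)
  (HF : forall u v, F u v -> In u P /\ In v P)
  (Hcov : forall y, In y P -> PA y \/ PB y)
  (Hdisj : forall y, PA y -> PB y -> False) :
  forall xs x, is_walk F x xs -> PA x -> PB (walk_end x xs) ->
  exists p q, PA p /\ PB q /\ F p q /\
    dist2 x p + dist2 q (walk_end x xs) <= walk_length x xs.
Proof.
  induction xs as [|z zs IH]; intros x Hw HA HB.
  - exfalso. exact (Hdisj x HA HB).
  - destruct Hw as [Hxz Hw]. rewrite walk_end_cons in *. simpl.
    destruct (Hcov z (proj2 (HF _ _ Hxz))) as [Hz|Hz].
    + destruct (IH z Hw Hz HB) as [p [q [Hp [Hq [Hpq Hl]]]]].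
      exists p, q. repeat split; auto.
      pose proof (dist2_tri x z p). lra.
    + exists x, z. repeat split; auto. rewrite dist2_refl.
      pose proof (wl_end z zs). pose proof (dist2_nonneg x z). lra.
Qed.

Section Chain.
Variable P : list point.
Variable F : point -> point -> Prop.
Hypothesis HL : LGG P F.
Variable r : nat -> point.
Hypothesis rinj : forall i j, r i = r j -> i = j.
Hypothesis rdisk : forall p q v, ((p < q < v)%nat \/ (v < q < p)%nat) ->
  in_diam_disk (r v) (r p) (r q).

Lemma Fsym u v : F u v -> F v u.
Proof. destruct HL as [[_ H] _]. apply H. Qed.
Lemma Fin u v : F u v -> In u P /\ In v P /\ u <> v.
Proof. destruct HL as [[H _] _]. apply H. Qed.

Lemma uniq_side v p u : F (r v) (r p) -> F (r v) (r u) ->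
  ((p < v /\ u < v)%nat \/ (v < p /\ v < u)%nat) -> p = u.
Proof.
  intros H1 H2 Hs.
  destruct (Nat.lt_trichotomy p u) as [Hpu|[Hpu|Hpu]]; [|exact Hpu|].
  - exfalso. destruct HL as [_ HL2].
    destruct Hs as [[Hp Hu]|[Hp Hu]].
    +
      apply (HL2 (r v) (r p) H1 (r u)).
      * apply (Fin _ _ H2).
      * intros E. apply rinj in E. lia.
      * intros E. apply rinj in E. lia.
      * left; exact H2.
      * apply rdisk. lia.
    +
      apply (HL2 (r v) (r u) H2 (r p)).
      * apply (Fin _ _ H1).
      * intros E. apply rinj in E. lia.
      * intros E. apply rinj in E. lia.
      * left; exact H1.
      * apply rdisk. lia.
  - exfalso. destruct HL as [_ HL2].
    destruct Hs as [[Hp Hu]|[Hp Hu]].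
    + apply (HL2 (r v) (r u) H2 (r p)).
      * apply (Fin _ _ H1).
      * intros E. apply rinj in E. lia.
      * intros E. apply rinj in E. lia.
      * left; exact H1.
      * apply rdisk. lia.
    + apply (HL2 (r v) (r p) H1 (r u)).
      * apply (Fin _ _ H2).
      * intros E. apply rinj in E. lia.
      * intros E. apply rinj in E. lia.
      * left; exact H2.
      * apply rdisk. lia.
Qed.

Inductive RC (k : nat) : nat -> Prop :=
| RC1 v : (k < v)%nat -> F (r k) (r v) -> RC k v
| RC2 u v : RC k u -> (u < v)%nat -> F (r u) (r v) -> RC k v.
Inductive LC (k : nat) : nat -> Prop :=
| LC1 v : (v < k)%nat -> F (r k) (r v) -> LC k v
| LC2 u v : LC k u -> (v < u)%nat -> F (r u) (r v) -> LC k v.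

Lemma RC_gt k v : RC k v -> (k < v)%nat.
Proof. induction 1; lia. Qed.
Lemma LC_lt k v : LC k v -> (v < k)%nat.
Proof. induction 1; lia. Qed.

Definition OnPath k v := v = k \/ RC k v \/ LC k v.

Lemma Firr v : ~ F (r v) (r v).
Proof. intros H. destruct (Fin _ _ H) as [_ [_ H']]. apply H'; reflexivity. Qed.

Lemma onpath_step k v u : OnPath k v -> F (r v) (r u) -> OnPath k u.
Proof.
  intros Hv Hvu.
  destruct (Nat.lt_trichotomy u v) as [Huv|[Huv|Huv]].
  2:{ subst. exfalso. exact (Firr _ Hvu). }
  - destruct Hv as [Hv|[Hv|Hv]].
    + subst. right; right. apply LC1; auto.
    + inversion Hv; subst.
      * left. symmetry. apply (uniq_side v k u); [apply Fsym; assumption | assumption | lia].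
      * right; left. assert (u0 = u) by (apply (uniq_side v u0 u); [apply Fsym; assumption | assumption | lia]).
        subst; auto.
    + right; right. eapply LC2; eauto.
  - destruct Hv as [Hv|[Hv|Hv]].
    + subst. right; left. apply RC1; auto.
    + right; left. eapply RC2; eauto.
    + inversion Hv; subst.
      * left. symmetry. apply (uniq_side v k u); [apply Fsym; assumption | assumption | lia].
      * right; right. assert (u0 = u) by (apply (uniq_side v u0 u); [apply Fsym; assumption | assumption | lia]).
        subst; auto.
Qed.

Lemma forced (k : nat) (K : R)
  (Hnear : forall y, In y P -> dist2 (r k) y < K -> exists i, y = r i) :
  forall xs, is_walk F (r k) xs -> walk_end (r k) xs = r (S k) ->
  walk_length (r k) xs < K -> F (r k) (r (S k)).
Proof.
  assert (Gen : forall xs v, is_walk F (r v) xs -> OnPath k v ->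
     dist2 (r k) (r v) + walk_length (r v) xs < K ->
     exists w, walk_end (r v) xs = r w /\ OnPath k w).
  { induction xs as [|z zs IH]; intros v Hw Hv Hl.
    - exists v. split; auto.
    - destruct Hw as [Hvz Hw]. simpl in Hl.
      pose proof (wl_nonneg z zs).
      pose proof (dist2_tri (r k) (r v) z).
      destruct (Hnear z (proj1 (proj2 (Fin _ _ Hvz)))) as [u Hu]. lra.
      subst z. rewrite walk_end_cons.
      apply (IH u Hw (onpath_step k v u Hv Hvz)).
      pose proof (dist2_tri (r k) (r v) (r u)). lra. }
  intros xs Hw He Hl.
  destruct (Gen xs k Hw (or_introl eq_refl)) as [w [Hw1 Hw2]].
  { rewrite dist2_refl. lra. }
  rewrite He in Hw1. apply rinj in Hw1. subst w.
  destruct Hw2 as [H|[H|H]].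
  - lia.
  - inversion H; subst; auto. apply RC_gt in H0. lia.
  - apply LC_lt in H. lia.
Qed.
End Chain.

Definition ray (e1 e2 : R) (i : nat) : point := (INR i * e1, INR i * e2).

Lemma ray_inj e1 e2 : e1 * e1 + e2 * e2 = 1 -> forall i j, ray e1 e2 i = ray e1 e2 j -> i = j.
Proof.
  intros He i j E. unfold ray in E. injection E as E1 E2.
  apply INR_eq.
  assert ((INR i - INR j) * (e1 * e1 + e2 * e2) = 0).
  { replace ((INR i - INR j) * (e1 * e1 + e2 * e2)) with
      ((INR i * e1 - INR j * e1) * e1 + (INR i * e2 - INR j * e2) * e2) by ring.
    rewrite E1, E2. ring. }
  rewrite He in H. lra.
Qed.

Lemma ray_disk e1 e2 : forall p q v, ((p < q < v)%nat \/ (v < q < p)%nat) ->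
  in_diam_disk (ray e1 e2 v) (ray e1 e2 p) (ray e1 e2 q).
Proof.
  intros p q v H. unfold in_diam_disk, ray; cbn [fst snd].
  assert (Hq : (INR q - INR v) * (INR q - INR p) <= 0).
  { destruct H as [[H1 H2]|[H1 H2]]; apply lt_INR in H1; apply lt_INR in H2; nra. }
  assert (0 <= e1 * e1 + e2 * e2) by nra.
  replace ((INR q * e1 - INR v * e1) * (INR q * e1 - INR p * e1) +
   (INR q * e2 - INR v * e2) * (INR q * e2 - INR p * e2)) with
   ((INR q - INR v) * (INR q - INR p) * (e1 * e1 + e2 * e2)) by ring.
  nra.
Qed.

Lemma ray_step e1 e2 : e1 * e1 + e2 * e2 = 1 -> forall k, dist2 (ray e1 e2 k) (ray e1 e2 (S k)) = 1.
Proof.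
  intros He k. unfold dist2, ray; cbn [fst snd]. rewrite S_INR.
  replace ((INR k * e1 - (INR k + 1) * e1) ^ 2 + (INR k * e2 - (INR k + 1) * e2) ^ 2)
    with (e1 * e1 + e2 * e2) by ring. rewrite He. apply sqrt_1.
Qed.

Lemma bad_consec P F (HL : LGG P F) e1 e2 (He : e1 * e1 + e2 * e2 = 1) k K K'
  (Hnear : forall y, In y P -> dist2 (ray e1 e2 k) y < K -> exists i, y = ray e1 e2 i)
  (HK : K' <= K) (Hnot : ~ F (ray e1 e2 k) (ray e1 e2 (S k))) :
  forall xs, is_walk F (ray e1 e2 k) xs -> walk_end (ray e1 e2 k) xs = ray e1 e2 (S k) ->
  walk_length (ray e1 e2 k) xs >= K' * dist2 (ray e1 e2 k) (ray e1 e2 (S k)).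
Proof.
  intros xs Hw Hend. rewrite (ray_step e1 e2 He).
  destruct (Rlt_le_dec (walk_length (ray e1 e2 k) xs) K) as [Hl|Hl].
  - exfalso. apply Hnot. eapply (forced P F HL (ray e1 e2) (ray_inj e1 e2 He) (ray_disk e1 e2) k K Hnear xs); eauto.
  - lra.
Qed.

Lemma NoDup_map_inj {A B : Type} (f : A -> B) (l : list A) :
  (forall x y, f x = f y -> x = y) -> NoDup l -> NoDup (map f l).
Proof.
  intros Hf Hl. induction Hl as [|x l Hx Hl IH]; simpl; constructor; auto.
  intros Hin. apply in_map_iff in Hin. destruct Hin as [y [Hy Hy']].
  apply Hf in Hy. subst. contradiction.
Qed.

Section Num.
Variable Q : R.
Hypothesis HQ : 2 <= Q.
Let c := (Q*Q - 1) / (Q*Q + 1).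
Let s := 2*Q / (Q*Q + 1).

Lemma pos_den : 0 < Q*Q + 1. Proof. nra. Qed.
Lemma Hc : c * (Q*Q+1) = Q*Q - 1.
Proof. unfold c. field. pose proof pos_den. lra. Qed.
Lemma Hs : s * (Q*Q+1) = 2*Q.
Proof. unfold s. field. pose proof pos_den. lra. Qed.
Lemma Hcs : c*c + s*s = 1.
Proof. unfold c, s. field. pose proof pos_den. lra. Qed.
Lemma c_pos : 0 < c.
Proof. unfold c. apply Rdiv_lt_0_compat; nra. Qed.
Lemma c_le1 : c <= 1.
Proof. pose proof Hc. pose proof pos_den. nra. Qed.
Lemma s_pos : 0 < s.
Proof. unfold s. apply Rdiv_lt_0_compat; nra. Qed.
Lemma Q2s2 : 2 <= Q*Q*(s*s).
Proof.
  pose proof Hs. pose proof pos_den.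
  assert (E : Q*Q*(s*s) * ((Q*Q+1)*(Q*Q+1)) = 4*(Q*Q)*(Q*Q)).
  { replace (Q*Q*(s*s) * ((Q*Q+1)*(Q*Q+1))) with (Q*Q*((s*(Q*Q+1))*(s*(Q*Q+1)))) by ring.
    rewrite H. ring. }
  assert (H4 : 4 <= Q*Q) by nra.
  assert (2 * ((Q*Q+1)*(Q*Q+1)) <= 4*(Q*Q)*(Q*Q)).
  { set (t := Q*Q) in *. nra. }
  apply (Rmult_le_reg_r ((Q*Q+1)*(Q*Q+1))). nra. nra.
Qed.
Lemma Q2s : Q/4 <= Q*Q*s.
Proof.
  pose proof Hs. pose proof pos_den.
  apply (Rmult_le_reg_r (Q*Q+1)). lra.
  replace (Q*Q*s*(Q*Q+1)) with (Q*Q*(s*(Q*Q+1))) by ring. rewrite H. nra.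
Qed.
Lemma distX : (2*(Q*Q)*1 - 2*(Q*Q)*c)^2 + (2*(Q*Q)*0 - 2*(Q*Q)*s)^2 <= (4*Q)*(4*Q).
Proof.
  pose proof Hc. pose proof Hcs. pose proof pos_den.
  replace ((2*(Q*Q)*1 - 2*(Q*Q)*c)^2 + (2*(Q*Q)*0 - 2*(Q*Q)*s)^2)
   with (4*(Q*Q)*(Q*Q)*((1-c)*(1-c) + s*s)) by ring.
  replace (s*s) with (1 - c*c) by lra.
  replace (4*(Q*Q)*(Q*Q)*((1-c)*(1-c) + (1 - c*c))) with (4*(Q*Q)*(Q*Q)*(2 - 2*c)) by ring.
  apply (Rmult_le_reg_r (Q*Q+1)). lra.
  replace (4*(Q*Q)*(Q*Q)*(2 - 2*c)*(Q*Q+1)) with (8*(Q*Q)*(Q*Q)*(Q*Q+1) - 8*(Q*Q)*(Q*Q)*(c*(Q*Q+1))) by ring.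
  rewrite H. nra.
Qed.
End Num.

Theorem lemma6 :
  exists c : R, 0 < c /\
    forall N : nat, exists n : nat, (N <= n)%nat /\ (0 < n)%nat /\
      exists P : list point, NoDup P /\ length P = n /\
        forall F : point -> point -> Prop, LGG P F ->
          dilation_at_least P F (c * sqrt (INR n)).
Proof.
  exists (1/8). split; [lra|].
  intros N.
  set (q := (N + 2)%nat). set (L := (q * q)%nat).
  exists (2 * (L + 1))%nat.
  split. { unfold L, q. nia. } split. { lia. }
  set (Q := INR q).
  assert (HQ : 2 <= Q). { unfold Q, q. rewrite plus_INR. simpl. pose proof (pos_INR N). lra. }
  pose proof (Hc Q HQ) as Hc'. pose proof (Hs Q HQ) as Hs'. pose proof (Hcs Q HQ) as Hcs'.
  pose proof (c_pos Q HQ) as Hc0. pose proof (c_le1 Q HQ) as Hc1. pose proof (s_pos Q HQ) as Hs0.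
  pose proof (Q2s2 Q HQ) as HQs2. pose proof (Q2s Q HQ) as HQs. pose proof (distX Q HQ) as HdX.
  pose proof (pos_den Q HQ) as Hden.
  set (c := (Q*Q - 1) / (Q*Q + 1)) in *.
  set (s := 2*Q / (Q*Q + 1)) in *.
  set (a := ray 1 0). set (b := ray c s).
  assert (Ha1 : 1 * 1 + 0 * 0 = 1) by ring.
  assert (Hb1 : c * c + s * s = 1) by exact Hcs'.
  assert (HL : INR L = Q * Q) by (unfold L, Q; apply mult_INR).
  set (m := (L + L)%nat).
  assert (Hm : INR m = 2 * (Q * Q)) by (unfold m; rewrite plus_INR; lra).
  set (idx := seq L (S L)).
  assert (Hidx : forall i, In i idx <-> (L <= i <= m)%nat).
  { intros i. unfold idx. rewrite in_seq. unfold m. lia. }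
  set (P := map a idx ++ map b idx).
  assert (HabP : forall i j, a i <> b j \/ (j = 0)%nat).
  { intros i j. destruct j as [|j]. right; reflexivity. left.
    intros E. unfold a, b, ray in E. injection E as _ E2. assert (E3 : INR i * 0 = INR (S j) * s) by exact E2. clear E2.
    assert (0 < INR (S j)) by (apply lt_0_INR; lia).
    assert (0 < INR (S j) * s) by (apply Rmult_lt_0_compat; lra). lra. }
  assert (HL4 : (4 <= L)%nat) by (unfold L, q; nia).
  assert (memP : forall y, In y P <-> (exists i, (L <= i <= m)%nat /\ y = a i) \/
                                     (exists j, (L <= j <= m)%nat /\ y = b j)).
  { intros y. unfold P. rewrite in_app_iff, !in_map_iff. split.
    - intros [[i [E H]]|[i [E H]]]; [left|right]; exists i; split; auto; apply Hidx; auto.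
    - intros [[i [H E]]|[i [H E]]]; [left|right]; exists i; split; auto; apply Hidx; auto. }
  assert (Hab : forall i j, (L <= j)%nat -> a i <> b j).
  { intros i j Hj. destruct (HabP i j); auto. lia. }
  exists P. split.
  { unfold P. apply NoDup_app.
    - apply NoDup_map_inj. apply ray_inj; exact Ha1. apply seq_NoDup.
    - apply NoDup_map_inj. apply ray_inj; exact Hb1. apply seq_NoDup.
    - intros y Hy1 Hy2. apply in_map_iff in Hy1, Hy2.
      destruct Hy1 as [i [E1 _]]. destruct Hy2 as [j [E2 Hj]].
      apply Hidx in Hj. apply (Hab i j). lia. congruence. }
  split.
  { unfold P. rewrite length_app, !length_map. unfold idx. rewrite length_seq. lia. }
  intros F HF.
  set (K := Q / 4).
  assert (HK : 1/8 * sqrt (INR (2 * (L + 1))) <= K).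
  { rewrite mult_INR, plus_INR, HL. replace (INR 2) with 2 by (simpl; lra). replace (INR 1) with 1 by (simpl; lra).
    assert (sqrt (2 * (Q * Q + 1)) <= 2 * Q) by (apply sqrt_le_of; nra).
    unfold K. lra. }
  set (K' := 1/8 * sqrt (INR (2 * (L + 1)))) in *.
  assert (HK'0 : 0 <= K') by (unfold K'; pose proof (sqrt_pos (INR (2 * (L + 1)))); lra).
  assert (HFP : forall u v, F u v -> In u P /\ In v P) by (intros u v H; destruct (Fin P F HF u v H) as [? [? _]]; auto).
  assert (DistAB : forall i j, (L <= i)%nat -> K <= dist2 (a i) (b j)).
  { intros i j Hi. apply le_INR in Hi. rewrite HL in Hi.
    eapply Rle_trans; [|apply (dist2_ge _ _ s (-c)); lra].
    unfold a, b, ray; cbn [fst snd].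
    replace ((INR i * 1 - INR j * c) * s + (INR i * 0 - INR j * s) * - c) with (INR i * s) by ring.
    unfold K. nra. }
  assert (DistBA : forall i j, (L <= i)%nat -> K <= dist2 (b i) (a j)).
  { intros i j Hi. apply le_INR in Hi. rewrite HL in Hi.
    eapply Rle_trans; [|apply (dist2_ge _ _ 0 1); lra].
    unfold a, b, ray; cbn [fst snd].
    replace ((INR i * c - INR j * 1) * 0 + (INR i * s - INR j * 0) * 1) with (INR i * s) by ring.
    unfold K. nra. }
  destruct (classic (forall i, (L <= i < m)%nat -> F (a i) (a (S i)))) as [HA|HA].
  2:{ apply not_all_ex_not in HA. destruct HA as [i Hi].
      apply imply_to_and in Hi. destruct Hi as [Hi Hn].
      exists (a i), (a (S i)). repeat split.
      - apply memP. left. exists i. split; auto; lia.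
      - apply memP. left. exists (S i). split; auto; lia.
      - intros E. apply ray_inj in E; [lia|exact Ha1].
      - apply (bad_consec P F HF 1 0 Ha1 i K K'); auto.
        intros y Hy Hd. apply memP in Hy. destruct Hy as [[j [_ E]]|[j [Hj E]]].
        + exists j; exact E.
        + exfalso. subst y. pose proof (DistAB i j (proj1 Hi)). unfold a, b in *. lra. }
  destruct (classic (forall i, (L <= i < m)%nat -> F (b i) (b (S i)))) as [HB|HB].
  2:{ apply not_all_ex_not in HB. destruct HB as [i Hi].
      apply imply_to_and in Hi. destruct Hi as [Hi Hn].
      exists (b i), (b (S i)). repeat split.
      - apply memP. right. exists i. split; auto; lia.
      - apply memP. right. exists (S i). split; auto; lia.
      - intros E. apply ray_inj in E; [lia|exact Hb1].
      - apply (bad_consec P F HF c s Hb1 i K K'); auto.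
        intros y Hy Hd. apply memP in Hy. destruct Hy as [[j [Hj E]]|[j [_ E]]].
        + exfalso. subst y. pose proof (DistBA i j (proj1 Hi)). unfold a, b in *. lra.
        + exists j; exact E. }
  (* both rays fully connected: no cross edges except at index L *)
  destruct HF as [HG HLG].
  assert (Excl : forall i j, (L < i <= m)%nat -> (L < j <= m)%nat -> F (a i) (b j) -> False).
  { intros i j Hi Hj Hij.
    destruct i as [|i']; [lia|]. destruct j as [|j']; [lia|].
    assert (H1 : F (a (S i')) (a i')) by (apply (Fsym P F (conj HG HLG)); apply HA; lia).
    assert (H2 : F (b (S j')) (b j')) by (apply (Fsym P F (conj HG HLG)); apply HB; lia).
    assert (Hji : F (b (S j')) (a (S i'))) by (apply (Fsym P F (conj HG HLG)); exact Hij).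
    pose proof (HLG _ _ Hij (a i')) as X1.
    pose proof (HLG _ _ Hji (b j')) as X2.
    assert (X1' : ~ in_diam_disk (a (S i')) (b (S j')) (a i')).
    { apply X1.
      - apply memP. left. exists i'. split; auto; lia.
      - intros E. apply ray_inj in E; [lia|exact Ha1].
      - apply Hab. lia.
      - left; exact H1. }
    assert (X2' : ~ in_diam_disk (b (S j')) (a (S i')) (b j')).
    { apply X2.
      - apply memP. right. exists j'. split; auto; lia.
      - intros E. apply ray_inj in E; [lia|exact Hb1].
      - intros E. symmetry in E. revert E. apply Hab. lia.
      - left; exact H2. }
    unfold in_diam_disk, a, b, ray in X1', X2'. cbn [fst snd] in X1', X2'.
    rewrite !S_INR in X1', X2'.
    apply Rnot_le_lt in X1'. apply Rnot_le_lt in X2'.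
    assert (Hi' : Q * Q <= INR i') by (rewrite <- HL; apply le_INR; lia).
    replace ((INR i' * 1 - (INR i' + 1) * 1) * (INR i' * 1 - (INR j' + 1) * c) +
          (INR i' * 0 - (INR i' + 1) * 0) * (INR i' * 0 - (INR j' + 1) * s)) with
          ((INR j' + 1) * c - INR i') in X1' by ring.
    replace ((INR j' * c - (INR j' + 1) * c) * (INR j' * c - (INR i' + 1) * 1) +
          (INR j' * s - (INR j' + 1) * s) * (INR j' * s - (INR i' + 1) * 0)) with
          ((INR i' + 1) * c - INR j' * (c * c + s * s)) in X2' by ring.
    rewrite Hb1 in X2'.
    set (I := INR i' + 1) in *. set (J := INR j' + 1) in *.
    assert (E1 : J * c > I - 1) by (unfold I; lra).
    assert (E2 : I * c > J - 1) by (unfold J; lra).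
    assert (E3 : J * c < I * c * c + c) by nra.
    assert (E4 : I * (s * s) < 1 + c).
    { replace (s * s) with (1 - c * c) by lra. nra. }
    assert (Q * Q * (s * s) <= I * (s * s)) by (unfold I; nra).
    lra. }
  exists (a m), (b m). repeat split.
  - apply memP. left. exists m. split; auto; lia.
  - apply memP. right. exists m. split; auto; lia.
  - apply Hab. lia.
  - intros xs Hw Hend.
    destruct (crossing F P (fun y => exists i, (L <= i <= m)%nat /\ y = a i)
                           (fun y => exists j, (L <= j <= m)%nat /\ y = b j)
                           HFP (fun y Hy => proj1 (memP y) Hy)) with (xs := xs) (x := a m)
      as [p [p' [[i [Hi Ep]] [[j [Hj Ep']] [Hpp Hlen]]]]]; auto.
    + intros y [i [Hi E1]] [j [Hj E2]]. subst y. apply (Hab i j); auto. lia.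
    + exists m. split; auto. lia.
    + rewrite Hend. exists m. split; auto. lia.
    + subst p p'. rewrite Hend in Hlen.
      assert (Hd1 : INR m - INR i <= dist2 (a m) (a i)).
      { eapply Rle_trans; [|apply (dist2_ge _ _ 1 0); lra].
        unfold a, ray; cbn [fst snd]. lra. }
      assert (Hd2 : INR m - INR j <= dist2 (b j) (b m)).
      { eapply Rle_trans; [|apply (dist2_ge _ _ (-c) (-s)); lra].
        unfold b, ray; cbn [fst snd].
        replace ((INR j * c - INR m * c) * - c + (INR j * s - INR m * s) * - s)
          with ((INR m - INR j) * (c * c + s * s)) by ring. rewrite Hb1. lra. }
      assert (Hij : (i = L \/ j = L)%nat).
      { destruct (Nat.eq_dec i L); auto. destruct (Nat.eq_dec j L); auto.
        exfalso. apply (Excl i j); auto; lia. }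
      assert (Him : INR i <= INR m) by (apply le_INR; lia).
      assert (Hjm : INR j <= INR m) by (apply le_INR; lia).
      assert (Hlow : Q * Q <= walk_length (a m) xs).
      { destruct Hij as [E|E]; subst.
        - rewrite HL, Hm in *. lra.
        - rewrite HL, Hm in *. lra. }
      assert (Hdist : dist2 (a m) (b m) <= 4 * Q).
      { unfold dist2, a, b, ray; cbn [fst snd]. rewrite Hm. apply sqrt_le_of. lra. exact HdX. }
      assert (K' * dist2 (a m) (b m) <= Q * Q).
      { pose proof (dist2_nonneg (a m) (b m)).
        apply Rle_trans with (K * (4 * Q)). apply Rmult_le_compat; lra.
        unfold K. lra. }
      lra.
Qed.
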